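(* Chekanov tori are not Hamiltonian stationary: if $\gamma\subset\mathbb{C}$ is a smooth simple closed curve contained in an open half-plane whose boundary line passes through the origin (so $\gamma$ avoids the origin), then the twisted torus $L_\gamma$ is not Hamiltonian stationary.
   Context: Identify $\mathbb{C}^2\cong\mathbb{R}^4$ with its Euclidean metric and standard complex structure $J$ (multiplication by $i$). For a smooth regular simple closed curve $\gamma:\mathbb{R}/2\pi\mathbb{Z}\to\mathbb{C}\setminus\{0\}$, the twisted torus is $L_\gamma=\left\{\tfrac{1}{\sqrt2}\left(\gamma(\beta)e^{i\alpha},\gamma(\beta)e^{-i\alpha}\right):\alpha,\beta\in[0,2\pi)\right\}\subset\mathbb{C}^2$; when $\gamma$ lies in an open half-plane (bounded by a line through $0$) it is called a Chekanov torus. Let $g$ be the induced metric and $H$ the mean curvature vector (trace of the second fundamental form). $L_\gamma$ is Hamiltonian stationary if it is a critical point of area under all variations with variation field $J\nabla h$, $h\in C^\infty(L_\gamma)$; equivalently (Oh) $\mathrm{div}_g(JH)=0$. *)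

(* Defs.v *)
From Stdlib Require Import Reals Lra List.
From Coquelicot Require Import Coquelicot.
Open Scope R_scope.

(** Vectors of R^4 = C^2 are functions nat -> R, coordinates 0..3 being
    (Re z1, Im z1, Re z2, Im z2). *)
Definition vec4 := nat -> R.

Definition dot4 (u v : vec4) : R := u 0%nat * v 0%nat + u 1%nat * v 1%nat
  + u 2%nat * v 2%nat + u 3%nat * v 3%nat.

(** The standard complex structure J (multiplication by i on C^2). *)
Definition Jc (u : vec4) : vec4 := fun k =>
  match k with
  | 0%nat => - u 1%nat
  | 1%nat => u 0%nat
  | 2%nat => - u 3%nat
  | 3%nat => u 2%nat
  | _ => 0
  end.

Definition surf := R -> R -> vec4.

Definition dA (S : surf) (a b : R) : vec4 := fun k => Derive (fun x => S x b k) a.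
Definition dB (S : surf) (a b : R) : vec4 := fun k => Derive (fun y => S a y k) b.

Definition g11 S a b := dot4 (dA S a b) (dA S a b).
Definition g12 S a b := dot4 (dA S a b) (dB S a b).
Definition g22 S a b := dot4 (dB S a b) (dB S a b).
Definition gdet S a b := g11 S a b * g22 S a b - g12 S a b ^ 2.

Definition area (S : surf) : R :=
  RInt (fun b => RInt (fun a => sqrt (gdet S a b)) 0 (2 * PI)) 0 (2 * PI).

(** Gradient (w.r.t. g) of a function h(alpha,beta) on the surface,
    as a tangent vector in R^4:  grad h = g^{ij} d_j h d_i S. *)
Definition grad (S : surf) (h : R -> R -> R) (a b : R) : vec4 := fun k =>
  let ha := Derive (fun x => h x b) a in
  let hb := Derive (fun y => h a y) b in
  ((g22 S a b * ha - g12 S a b * hb) * dA S a b k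
   + (g11 S a b * hb - g12 S a b * ha) * dB S a b k) / gdet S a b.

Definition ham_var (S : surf) (h : R -> R -> R) (t : R) : surf :=
  fun a b k => S a b k + t * Jc (grad S h a b) k.

(** Iterated partial derivatives of a function of two variables
    (true = d/dalpha, false = d/dbeta). *)
Fixpoint iterD (l : list bool) (h : R -> R -> R) : R -> R -> R :=
  match l with
  | nil => h
  | true :: l' => fun a b => Derive (fun x => iterD l' h x b) a
  | false :: l' => fun a b => Derive (fun y => iterD l' h a y) b
  end.

Definition smooth2 (h : R -> R -> R) : Prop :=
  forall (l : list bool) (a b : R),
    ex_derive (fun x => iterD l h x b) a /\
    ex_derive (fun y => iterD l h a y) b /\
    continuous (fun p : R * R => iterD l h (fst p) (snd p)) (a, b).

(** Smooth functions on the torus R^2/(2pi Z)^2. *)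
Definition torus_fun (h : R -> R -> R) : Prop :=
  smooth2 h /\ (forall a b, h (a + 2 * PI) b = h a b)
            /\ (forall a b, h a (b + 2 * PI) = h a b).

Definition ham_stationary (S : surf) : Prop :=
  forall h, torus_fun h -> Derive (fun t => area (ham_var S h t)) 0 = 0.

(** The twisted torus L_gamma for gamma = gx + i gy:
    (1/sqrt2) (gamma(b) e^{i a}, gamma(b) e^{-i a}). *)
Definition twisted (gx gy : R -> R) : surf := fun a b k =>
  match k with
  | 0%nat => (gx b * cos a - gy b * sin a) / sqrt 2
  | 1%nat => (gx b * sin a + gy b * cos a) / sqrt 2
  | 2%nat => (gx b * cos a + gy b * sin a) / sqrt 2
  | 3%nat => (gy b * cos a - gx b * sin a) / sqrt 2
  | _ => 0
  end.

Definition smooth_closed_curve (gx gy : R -> R) : Prop :=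
  (forall n x, ex_derive_n gx n x) /\ (forall n x, ex_derive_n gy n x) /\
  (forall x, gx (x + 2 * PI) = gx x /\ gy (x + 2 * PI) = gy x) /\
  (forall x, Derive gx x <> 0 \/ Derive gy x <> 0) /\
  (forall s t, 0 <= s < 2 * PI -> 0 <= t < 2 * PI ->
     gx s = gx t -> gy s = gy t -> s = t).

Definition in_open_half_plane (gx gy : R -> R) : Prop :=
  exists c d : R, (c <> 0 \/ d <> 0) /\ forall s, c * gx s + d * gy s > 0.

(* Main.v *)
Require Import Defs.
From Stdlib Require Import Reals Lra Lia List FunctionalExtensionality.
From Coquelicot Require Import Coquelicot.
Open Scope R_scope.

Fixpoint Ck (n : nat) (f : R -> R) : Prop :=
  match n with
  | O => True
  | S n => (forall x, ex_derive f x) /\ Ck n (Derive f)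
  end.

Lemma Ck_ext : forall n f g, (forall x, f x = g x) -> Ck n f -> Ck n g.
Proof.
  induction n; intros f g E H; simpl in *; auto.
  destruct H as [H1 H2]; split.
  - intro x; apply ex_derive_ext with f; auto.
  - apply IHn with (Derive f); auto. intro x; apply Derive_ext; auto.
Qed.

Lemma Ck_mono : forall n f, Ck (S n) f -> Ck n f.
Proof.
  induction n; intros f H; simpl in *; auto.
  destruct H as [H1 H2]; split; auto.
Qed.

Lemma Ck_const : forall n c, Ck n (fun _ => c).
Proof.
  induction n; intros c; simpl; auto. split.
  - intros; apply ex_derive_const.
  - apply Ck_ext with (fun _ => 0). intro; rewrite Derive_const; auto. apply IHn.
Qed.

Lemma Ck_plus : forall n f g, Ck n f -> Ck n g -> Ck n (fun x => f x + g x).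
Proof.
  induction n; intros f g Hf Hg; simpl in *; auto.
  destruct Hf as [F1 F2], Hg as [G1 G2]; split.
  - intro x. apply (ex_derive_plus f g x); auto.
  - apply Ck_ext with (fun x => Derive f x + Derive g x).
    + intro x. symmetry. apply Derive_plus; auto.
    + apply IHn; auto.
Qed.

Lemma Ck_opp : forall n f, Ck n f -> Ck n (fun x => - f x).
Proof.
  induction n; intros f Hf; simpl in *; auto.
  destruct Hf as [F1 F2]; split.
  - intro x. apply (ex_derive_opp f x); auto.
  - apply Ck_ext with (fun x => - Derive f x).
    + intro x. symmetry. apply Derive_opp.
    + apply IHn; auto.
Qed.

Lemma Ck_mult : forall n f g, Ck n f -> Ck n g -> Ck n (fun x => f x * g x).
Proof.
  induction n; intros f g Hf Hg; simpl in *; auto.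
  pose proof (Ck_mono n f Hf) as Hf'. pose proof (Ck_mono n g Hg) as Hg'.
  destruct Hf as [F1 F2], Hg as [G1 G2]; split.
  - intro x. apply ex_derive_mult; auto.
  - apply Ck_ext with (fun x => Derive f x * g x + f x * Derive g x).
    + intro x. symmetry. apply Derive_mult; auto.
    + apply Ck_plus; apply IHn; auto.
Qed.

Lemma Ck_inv : forall n g, (forall x, g x <> 0) -> Ck n g -> Ck n (fun x => / g x).
Proof.
  induction n; intros g Hn Hg; simpl in *; auto.
  pose proof (Ck_mono n g Hg) as Hg'.
  destruct Hg as [G1 G2]; split.
  - intro x. apply ex_derive_inv; auto.
  - apply Ck_ext with (fun x => - (Derive g x * (/ g x * / g x))).
    + intro x. symmetry. apply is_derive_unique. auto_derive; auto.
      change (fun x0 : R => g x0) with g. field. auto.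
    + apply Ck_opp. apply Ck_mult; auto. apply Ck_mult; apply IHn; auto.
Qed.

Lemma Ck_sqrt : forall n g, (forall x, 0 < g x) -> Ck n g -> Ck n (fun x => sqrt (g x)).
Proof.
  induction n; intros g Hp Hg; simpl in *; auto.
  pose proof (Ck_mono n g Hg) as Hg'.
  destruct Hg as [G1 G2]; split.
  - intro x. auto_derive; auto.
  - apply Ck_ext with (fun x => Derive g x * (/2 * / sqrt (g x))).
    + intro x. symmetry. apply is_derive_unique. auto_derive; auto.
      change (fun x0 : R => g x0) with g. field. apply Rgt_not_eq, sqrt_lt_R0; auto.
    + apply Ck_mult; auto. apply Ck_mult. apply Ck_const.
      apply Ck_inv. intro x; apply Rgt_not_eq, sqrt_lt_R0; auto. apply IHn; auto.
Qed.

Definition Cinf f := forall n, Ck n f.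

Lemma Derive_n_S : forall f k x, Derive_n (Derive f) k x = Derive_n f (S k) x.
Proof.
  intros f k; induction k; intro x; simpl; auto.
  apply Derive_ext; auto.
Qed.

Lemma Cinf_of_exn : forall f, (forall n x, ex_derive_n f n x) -> Cinf f.
Proof.
  intros f H n; revert f H; induction n; intros f H; simpl; auto. split.
  - intro x. apply (H 1%nat x).
  - apply IHn. intros k x. destruct k; simpl; auto.
    apply ex_derive_ext with (Derive_n f (S k)).
    intro; symmetry; apply Derive_n_S. apply (H (S (S k)) x).
Qed.

Lemma Ck_Derive_n : forall k n f, Ck (n + k) f -> Ck n (Derive_n f k).
Proof.
  induction k; intros n f H. simpl. rewrite Nat.add_0_r in H. auto.
  simpl. assert (Ck (S n) (Derive_n f k)).
  apply IHk. replace (S n + k)%nat with (n + S k)%nat by lia. auto.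
  apply H0.
Qed.

Lemma Cinf_Derive_n : forall f k, Cinf f -> Cinf (Derive_n f k).
Proof. intros f k H n. apply Ck_Derive_n, H. Qed.

Lemma Cinf_Derive : forall f, Cinf f -> Cinf (Derive f).
Proof. intros f H n. apply (H (S n)). Qed.

Lemma Cinf_ex : forall f x, Cinf f -> ex_derive f x.
Proof. intros f x H. apply (H 1%nat). Qed.

Lemma Cinf_cont : forall f (x : R), Cinf f -> continuous f x.
Proof. intros. apply (ex_derive_continuous (K := R_AbsRing) (V := R_NormedModule)), Cinf_ex; auto. Qed.

Lemma Cinf_ext : forall f g, (forall x, f x = g x) -> Cinf f -> Cinf g.
Proof. intros f g E H n. apply Ck_ext with f; auto. Qed.

Lemma sq2 : forall u v, u / sqrt 2 * (v / sqrt 2) = u * v / 2.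
Proof.
  intros. assert (H: sqrt 2 * sqrt 2 = 2) by (apply sqrt_sqrt; lra).
  assert (sqrt 2 <> 0) by (apply Rgt_not_eq, sqrt_lt_R0; lra).
  rewrite <- H at 3. field. auto.
Qed.

Lemma dA_tw : forall fx fy a b,
  dA (twisted fx fy) a b 0%nat = (-(fx b * sin a) - fy b * cos a) / sqrt 2 /\
  dA (twisted fx fy) a b 1%nat = (fx b * cos a - fy b * sin a) / sqrt 2 /\
  dA (twisted fx fy) a b 2%nat = (-(fx b * sin a) + fy b * cos a) / sqrt 2 /\
  dA (twisted fx fy) a b 3%nat = (-(fy b * sin a) - fx b * cos a) / sqrt 2.
Proof.
  intros. unfold dA, twisted. repeat split; apply is_derive_unique; auto_derive; auto; field;
  apply Rgt_not_eq, sqrt_lt_R0; lra.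
Qed.

Lemma dB_tw : forall (fx fy : R -> R) (a b : R), ex_derive fx b -> ex_derive fy b ->
  dB (twisted fx fy) a b 0%nat = (Derive fx b * cos a - Derive fy b * sin a) / sqrt 2 /\
  dB (twisted fx fy) a b 1%nat = (Derive fx b * sin a + Derive fy b * cos a) / sqrt 2 /\
  dB (twisted fx fy) a b 2%nat = (Derive fx b * cos a + Derive fy b * sin a) / sqrt 2 /\
  dB (twisted fx fy) a b 3%nat = (Derive fy b * cos a - Derive fx b * sin a) / sqrt 2.
Proof.
  intros. unfold dB, twisted. repeat split; apply is_derive_unique; auto_derive; auto; 
  change (fun x : R => fx x) with fx; change (fun x : R => fy x) with fy; field;
  apply Rgt_not_eq, sqrt_lt_R0; lra.
Qed.

Lemma tw_metric : forall (fx fy : R -> R) (a b : R), ex_derive fx b -> ex_derive fy b ->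
  g11 (twisted fx fy) a b = fx b ^ 2 + fy b ^ 2 /\
  g12 (twisted fx fy) a b = 0 /\
  g22 (twisted fx fy) a b = Derive fx b ^ 2 + Derive fy b ^ 2.
Proof.
  intros fx fy a b Hx Hy.
  destruct (dA_tw fx fy a b) as (A0 & A1 & A2 & A3).
  destruct (dB_tw fx fy a b Hx Hy) as (B0 & B1 & B2 & B3).
  unfold g11, g12, g22, dot4. rewrite A0, A1, A2, A3, B0, B1, B2, B3, !sq2.
  pose proof (sin2_cos2 a) as Hs. unfold Rsqr in Hs.
  repeat split.
  - replace (fx b ^ 2 + fy b ^ 2) with ((fx b ^ 2 + fy b ^ 2) * (sin a * sin a + cos a * cos a))
      by (rewrite Hs; ring). field.
  - field.
  - replace (Derive fx b ^ 2 + Derive fy b ^ 2) with ((Derive fx b ^ 2 + Derive fy b ^ 2) * (sin a * sin a + cos a * cos a))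
      by (rewrite Hs; ring). field.
Qed.

Lemma tw_gdet : forall (fx fy : R -> R) (a b : R), ex_derive fx b -> ex_derive fy b ->
  gdet (twisted fx fy) a b = (fx b ^ 2 + fy b ^ 2) * (Derive fx b ^ 2 + Derive fy b ^ 2).
Proof.
  intros. destruct (tw_metric fx fy a b H H0) as (E1 & E2 & E3).
  unfold gdet. rewrite E1, E2, E3. ring.
Qed.

Lemma hv_tw : forall (gx gy th : R -> R) (t : R),
  (forall b, ex_derive gx b) -> (forall b, ex_derive gy b) ->
  (forall b, gx b ^ 2 + gy b ^ 2 <> 0) ->
  (forall b, Derive gx b ^ 2 + Derive gy b ^ 2 <> 0) ->
  ham_var (twisted gx gy) (fun _ b => th b) t =
  twisted (fun b => gx b - t * (Derive th b / (Derive gx b ^ 2 + Derive gy b ^ 2) * Derive gy b))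
          (fun b => gy b + t * (Derive th b / (Derive gx b ^ 2 + Derive gy b ^ 2) * Derive gx b)).
Proof.
  intros gx gy th t Hx Hy Hr Hs.
  apply functional_extensionality; intro a.
  apply functional_extensionality; intro b.
  apply functional_extensionality; intro k.
  unfold ham_var, grad. cbv zeta.
  rewrite Derive_const. change (fun y : R => th y) with th.
  destruct (tw_metric gx gy a b (Hx b) (Hy b)) as (E1 & E2 & E3).
  unfold gdet. rewrite E1, E2, E3.
  destruct (dB_tw gx gy a b (Hx b) (Hy b)) as (B0 & B1 & B2 & B3).
  specialize (Hr b). specialize (Hs b).
  assert (sqrt 2 <> 0) by (apply Rgt_not_eq, sqrt_lt_R0; lra).
  destruct k as [|[|[|[|k]]]]; unfold Jc.
  - rewrite B1. unfold twisted. field. auto.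
  - rewrite B0. unfold twisted. field. auto.
  - rewrite B3. unfold twisted. field. auto.
  - rewrite B2. unfold twisted. field. auto.
  - unfold twisted. ring.
Qed.

Lemma c2_1d : forall (f : R -> R) x y, continuity_pt f y -> continuity_2d_pt (fun _ v => f v) x y.
Proof.
  intros. apply (continuity_1d_2d_pt_comp f (fun _ v => v)); auto.
  apply continuity_2d_pt_id2.
Qed.

Lemma c2_to_1d : forall g x y, continuity_2d_pt g x y -> continuity_pt (fun v => g x v) y.
Proof.
  intros g x y H eps Heps.
  destruct (H (mkposreal eps Heps)) as [d Hd].
  exists d. split. apply cond_pos. intros z [_ Hz]. simpl in *. unfold R_dist in *.
  apply Hd. rewrite Rminus_eq_0, Rabs_R0. apply cond_pos. auto.
Qed.

Ltac c2 := repeat (first [apply continuity_2d_pt_plus | apply continuity_2d_pt_minus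
  | apply continuity_2d_pt_mult | apply continuity_2d_pt_opp | apply continuity_2d_pt_id1 | apply continuity_2d_pt_const
  | apply c2_1d; solve [auto] ]).

Definition P1 (a0 a1 a2 a3 : R -> R) (u b : R) :=
  (a0 b - u * a1 b) * (a0 b - u * a1 b) + (a2 b + u * a3 b) * (a2 b + u * a3 b).
Definition dP1 (a0 a1 a2 a3 : R -> R) (u b : R) :=
  2 * (- (a0 b - u * a1 b) * a1 b) + 2 * ((a2 b + u * a3 b) * a3 b).

Lemma P1_ge0 : forall a0 a1 a2 a3 u b, 0 <= P1 a0 a1 a2 a3 u b.
Proof. intros; unfold P1; apply Rplus_le_le_0_compat; apply Rle_0_sqr. Qed.


Definition PF a0 a1 a2 a3 a4 a5 a6 a7 u b :=
  P1 a0 a1 a2 a3 u b * P1 a4 a5 a6 a7 u b.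
Definition DF a0 a1 a2 a3 a4 a5 a6 a7 u b :=
  (dP1 a0 a1 a2 a3 u b * P1 a4 a5 a6 a7 u b + P1 a0 a1 a2 a3 u b * dP1 a4 a5 a6 a7 u b)
  / (2 * sqrt (PF a0 a1 a2 a3 a4 a5 a6 a7 u b)).

Lemma param_deriv : forall a0 a1 a2 a3 a4 a5 a6 a7 : R -> R,
  (forall b, continuity_pt a0 b) -> (forall b, continuity_pt a1 b) ->
  (forall b, continuity_pt a2 b) -> (forall b, continuity_pt a3 b) ->
  (forall b, continuity_pt a4 b) -> (forall b, continuity_pt a5 b) ->
  (forall b, continuity_pt a6 b) -> (forall b, continuity_pt a7 b) ->
  (forall b, 0 < PF a0 a1 a2 a3 a4 a5 a6 a7 0 b) ->
  is_derive (fun u => RInt (fun b => sqrt (PF a0 a1 a2 a3 a4 a5 a6 a7 u b)) 0 (2 * PI)) 0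
    (RInt (fun b => DF a0 a1 a2 a3 a4 a5 a6 a7 0 b) 0 (2 * PI)).
Proof.
  intros a0 a1 a2 a3 a4 a5 a6 a7 C0 C1 C2 C3 C4 C5 C6 C7 Hpos.
  set (Pf := PF a0 a1 a2 a3 a4 a5 a6 a7).
  assert (cP : forall u b, continuity_2d_pt Pf u b).
  { intros u b. unfold Pf, PF, P1. c2. }
  assert (Pge : forall u b, 0 <= Pf u b).
  { intros; unfold Pf, PF; apply Rmult_le_pos; apply P1_ge0. }
  assert (dF : forall u b, 0 < Pf u b ->
     is_derive (fun z => sqrt (Pf z b)) u (DF a0 a1 a2 a3 a4 a5 a6 a7 u b)).
  { intros u b Hp. unfold Pf, PF, DF, P1, dP1 in *. auto_derive. exact Hp.
    unfold PF, P1, Rminus. field. apply Rgt_not_eq, sqrt_lt_R0; auto. }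
  assert (PI2 : 0 < 2 * PI) by (pose proof PI_RGT_0; lra).
  replace (RInt (fun b => DF a0 a1 a2 a3 a4 a5 a6 a7 0 b) 0 (2 * PI))
    with (RInt (fun b => Derive (fun u => sqrt (Pf u b)) 0) 0 (2 * PI)).
  2:{ apply RInt_ext. intros b _. apply is_derive_unique, dF, Hpos. }
  apply (is_derive_RInt_param (fun u b => sqrt (Pf u b))).
  -
    destruct (continuity_ab_min (fun b => Pf 0 b) 0 (2 * PI)) as [mx [Hmx Imx]].
    lra. intros; apply c2_to_1d, cP.
    assert (m0 : 0 < Pf 0 mx) by apply Hpos.
    destruct (uniform_continuity_2d_1d' Pf 0 (2 * PI) 0 (fun x _ => cP 0 x)
      (mkposreal _ m0)) as [d Hd].
    exists d. intros u Hu t Ht.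
    assert (Hu' : Rabs (u - 0) < d) by exact Hu.
    rewrite Rmin_left, Rmax_right in Ht by lra.
    assert (Hp : 0 < Pf u t).
    { assert (Rabs (Pf u t - Pf 0 t) < Pf 0 mx).
      { apply (Hd t 0 t u Ht); try lra.
        - destruct d; simpl; lra.
        - apply Rabs_lt_between in Hu'. lra.
        - rewrite Rminus_eq_0, Rabs_R0. apply cond_pos. }
      specialize (Hmx t Ht). simpl in Hmx.
      apply Rabs_lt_between in H. lra. }
    exists (DF a0 a1 a2 a3 a4 a5 a6 a7 u t). apply dF; auto.
  - intros b _.
    apply continuity_2d_pt_ext_loc with (DF a0 a1 a2 a3 a4 a5 a6 a7).
    + apply locally_2d_impl with (fun u v => Pf u v <> 0).
      apply locally_2d_forall. intros u v Hn. symmetry. apply is_derive_unique, dF.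
      destruct (Pge u v); auto. congruence.
      apply continuity_2d_pt_neq_0; auto. apply Rgt_not_eq, Hpos.
    + unfold DF. apply continuity_2d_pt_mult.
      * unfold P1, dP1. c2.
      * apply continuity_2d_pt_inv.
        -- apply continuity_2d_pt_mult. apply continuity_2d_pt_const.
           apply (continuity_1d_2d_pt_comp sqrt Pf). apply continuity_pt_sqrt, Pge. apply cP.
        -- apply Rgt_not_eq. apply Rmult_lt_0_compat. lra. apply sqrt_lt_R0, Hpos.
  - exists (mkposreal 1 Rlt_0_1). intros y _.
    apply (ex_RInt_continuous (V := R_CompleteNormedModule)). intros z _.
    apply continuity_pt_filterlim.
    apply (c2_to_1d (fun u v => sqrt (Pf u v))).
    apply (continuity_1d_2d_pt_comp sqrt Pf). apply continuity_pt_sqrt, Pge. apply cP.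
Qed.

Lemma cont_pt_of : forall (g : R -> R) x, continuous g x -> continuity_pt g x.
Proof. intros. apply continuity_pt_filterlim. exact H. Qed.

Lemma RInt_pos_pt : forall (g : R -> R) a b c0, a < b ->
  (forall x, a <= x <= b -> continuous g x) ->
  (forall x, a <= x <= b -> 0 <= g x) -> a <= c0 <= b -> 0 < g c0 ->
  0 < RInt g a b.
Proof.
  intros g a b c0 Hab Hc Hn Hc0 Hg.
  pose proof (cont_pt_of g c0 (Hc c0 Hc0)) as Cp.
  destruct (Cp (g c0 / 2)) as [dl [Hdl Hd]]. lra.
  set (a' := Rmax a (c0 - dl / 2)). set (b' := Rmin b (c0 + dl / 2)).
  assert (Ha' : a <= a' <= c0) by (unfold a'; split; [apply Rmax_l | apply Rmax_lub; lra]).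
  assert (Hb' : c0 <= b' <= b) by (unfold b'; split; [apply Rmin_glb; lra | apply Rmin_l]).
  assert (Hab' : a' < b').
  { unfold a', b'. destruct (Rle_lt_dec a (c0 - dl/2)), (Rle_lt_dec b (c0 + dl/2)).
    - rewrite Rmax_right, Rmin_left by lra. lra.
    - rewrite Rmax_right, Rmin_right by lra. lra.
    - rewrite Rmax_left, Rmin_left by lra. lra.
    - rewrite Rmax_left, Rmin_right by lra. lra. }
  assert (Ex : forall u v, a <= u -> u <= v -> v <= b -> ex_RInt g u v).
  { intros u v H1 H2 H3. apply (ex_RInt_continuous (V := R_CompleteNormedModule)).
    intros z Hz. rewrite Rmin_left, Rmax_right in Hz by lra. apply Hc. lra. }
  rewrite <- (RInt_Chasles g a a' b) by (apply Ex; lra).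
  rewrite <- (RInt_Chasles g a' b' b) by (apply Ex; lra).
  unfold plus; simpl.
  assert (0 <= RInt g a a').
  { apply RInt_ge_0. lra. apply Ex; lra. intros; apply Hn; lra. }
  assert (0 <= RInt g b' b).
  { apply RInt_ge_0. lra. apply Ex; lra. intros; apply Hn; lra. }
  assert (0 < RInt g a' b').
  { apply RInt_gt_0. auto.
    - intros x Hx. destruct (Req_dec x c0) as [->|Hne]. lra.
      assert (Rabs (x - c0) < dl).
      { apply Rabs_def1.
        - assert (x <= c0 + dl/2). { apply Rle_trans with b'. lra. apply Rmin_r. } lra.
        - assert (c0 - dl/2 <= x). { apply Rle_trans with a'. apply Rmax_r. lra. } lra. }
      assert (R_dist (g x) (g c0) < g c0 / 2).
      { apply Hd. split. split. exact I. auto. exact H1. }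
      unfold R_dist in H2. apply Rabs_lt_between in H2. lra.
    - intros x Hx. apply Hc. lra. }
  lra.
Qed.

Lemma Derive_per : forall (f : R -> R) (T x : R), (forall z, f (z + T) = f z) ->
  ex_derive f (x + T) -> Derive f (x + T) = Derive f x.
Proof.
  intros f T x Hp He.
  rewrite <- (Derive_ext (fun z => f (z + T)) f x) by auto.
  symmetry. apply is_derive_unique. auto_derive. auto. change (fun x0 : R => f x0) with f. ring.
Qed.

Lemma iterD_b : forall (th : R -> R) l a b,
  iterD l (fun _ y => th y) a b = if forallb negb l then Derive_n th (length l) b else 0.
Proof.
  intros th l; induction l as [|[|] l IH]; intros a b; simpl.
  - auto.
  - rewrite (Derive_ext _ (fun _ => if forallb negb l then Derive_n th (length l) b else 0)).
    apply Derive_const. intro; apply IH.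
  - rewrite (Derive_ext _ (fun y => if forallb negb l then Derive_n th (length l) y else 0)).
    2: intro; apply IH.
    destruct (forallb negb l); simpl. auto. apply Derive_const.
Qed.

Lemma torus_b : forall th : R -> R, Cinf th -> (forall b, th (b + 2 * PI) = th b) ->
  torus_fun (fun _ b => th b).
Proof.
  intros th Hc Hp. split; [|split; auto].
  intros l a b. split; [|split].
  - apply ex_derive_ext with (fun _ => if forallb negb l then Derive_n th (length l) b else 0).
    intro; symmetry; apply iterD_b. apply ex_derive_const.
  - apply ex_derive_ext with (fun y => if forallb negb l then Derive_n th (length l) y else 0).
    intro; symmetry; apply iterD_b.
    destruct (forallb negb l). apply Cinf_ex, Cinf_Derive_n, Hc. apply ex_derive_const.
  - apply continuous_ext with (fun p : R * R => if forallb negb l then Derive_n th (length l) (snd p) else 0).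
    intro; symmetry; apply iterD_b.
    destruct (forallb negb l).
    + apply (continuous_comp (fun p : R * R => snd p) (Derive_n th (length l))).
      apply continuous_snd. apply Cinf_cont, Cinf_Derive_n, Hc.
    + apply continuous_const.
Qed.

Lemma Cinf_plus : forall f g, Cinf f -> Cinf g -> Cinf (fun x => f x + g x).
Proof. intros f g Hf Hg n. apply Ck_plus; auto. Qed.
Lemma Cinf_mult : forall f g, Cinf f -> Cinf g -> Cinf (fun x => f x * g x).
Proof. intros f g Hf Hg n. apply Ck_mult; auto. Qed.
Lemma Cinf_opp : forall f, Cinf f -> Cinf (fun x => - f x).
Proof. intros f Hf n. apply Ck_opp; auto. Qed.
Lemma Cinf_const : forall c, Cinf (fun _ => c).
Proof. intros c n. apply Ck_const. Qed.
Lemma Cinf_minus : forall f g, Cinf f -> Cinf g -> Cinf (fun x => f x - g x).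
Proof. intros f g Hf Hg. apply Cinf_plus; auto. apply Cinf_opp; auto. Qed.
Lemma Cinf_pow2 : forall f, Cinf f -> Cinf (fun x => f x ^ 2).
Proof. intros f Hf. apply Cinf_ext with (fun x => f x * f x). intro; ring. apply Cinf_mult; auto. Qed.
Lemma Cinf_div : forall f g, (forall x, g x <> 0) -> Cinf f -> Cinf g -> Cinf (fun x => f x / g x).
Proof. intros f g Hn Hf Hg. apply Cinf_mult; auto. intro n. apply Ck_inv; auto. Qed.
Lemma Cinf_sqrt : forall g, (forall x, 0 < g x) -> Cinf g -> Cinf (fun x => sqrt (g x)).
Proof. intros g Hp Hg n. apply Ck_sqrt; auto. Qed.

Lemma Cinf_inv : forall g, (forall x, g x <> 0) -> Cinf g -> Cinf (fun x => / g x).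
Proof. intros g Hn Hg n. apply Ck_inv; auto. Qed.

Ltac cinf := repeat (first [assumption | apply Cinf_plus | apply Cinf_minus | apply Cinf_div | apply Cinf_mult
  | apply Cinf_inv | apply Cinf_opp | apply Cinf_pow2 | apply Cinf_sqrt | apply Cinf_const | apply Cinf_Derive
  | assumption]).

Definition r2 (x y : R -> R) b := x b ^ 2 + y b ^ 2.
Definition s2 (x y : R -> R) b := Derive x b ^ 2 + Derive y b ^ 2.
Definition Wf (x y : R -> R) b := x b * Derive y b - y b * Derive x b.
Definition Vf (x y : R -> R) b := x b * Derive x b + y b * Derive y b.
Definition pf (th x y : R -> R) b := Derive th b / (Derive x b ^ 2 + Derive y b ^ 2) * Derive y b.
Definition qf (th x y : R -> R) b := Derive th b / (Derive x b ^ 2 + Derive y b ^ 2) * Derive x b.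
Definition Gf (x y : R -> R) b := Wf x y b ^ 2 / (r2 x y b * sqrt (r2 x y b * s2 x y b)).
Definition uf (x y : R -> R) b := Vf x y b / sqrt (r2 x y b * s2 x y b).


Lemma area_eq : forall x y th : R -> R, Cinf x -> Cinf y -> Cinf th ->
  (forall b, 0 < r2 x y b) -> (forall b, 0 < s2 x y b) -> forall t,
  area (ham_var (twisted x y) (fun _ b => th b) t) =
  2 * PI * RInt (fun b => sqrt (PF x (pf th x y) y (qf th x y) (Derive x) (Derive (pf th x y))
                                  (Derive y) (Derive (qf th x y)) t b)) 0 (2 * PI).
Proof.
  intros x y th Hx Hy Ht Hr Hs t.
  assert (Cp : Cinf (pf th x y)). { unfold pf. cinf. intro b; apply Rgt_not_eq, Hs. }
  assert (Cq : Cinf (qf th x y)). { unfold qf. cinf. intro b; apply Rgt_not_eq, Hs. }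
  assert (HV : ham_var (twisted x y) (fun _ b => th b) t =
    twisted (fun b => x b - t * pf th x y b) (fun b => y b + t * qf th x y b)).
  { apply hv_tw. intro; apply Cinf_ex; auto. intro; apply Cinf_ex; auto.
    intro b; apply Rgt_not_eq, Hr. intro b; apply Rgt_not_eq, Hs. }
  rewrite HV. unfold area.
  rewrite <- (RInt_scal (V := R_CompleteNormedModule)).
  2:{ apply (ex_RInt_continuous (V := R_CompleteNormedModule)). intros z _.
      apply continuous_sqrt_comp. unfold PF, P1. apply Cinf_cont. cinf. }
  apply RInt_ext. intros b _.
  rewrite (RInt_ext _ (fun _ => sqrt (PF x (pf th x y) y (qf th x y) (Derive x) (Derive (pf th x y))
                                  (Derive y) (Derive (qf th x y)) t b))).
  - rewrite RInt_const. unfold scal; simpl; unfold mult; simpl. ring.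
  - intros a _. rewrite tw_gdet.
    + f_equal.
      assert (E1 : Derive (fun b => x b - t * pf th x y b) b = Derive x b - t * Derive (pf th x y) b).
      { apply is_derive_unique. auto_derive. split. apply Cinf_ex; auto. split. apply Cinf_ex; auto. auto.
        change (fun x0 : R => x x0) with x. change (fun x0 : R => pf th x y x0) with (pf th x y). ring. }
      assert (E2 : Derive (fun b => y b + t * qf th x y b) b = Derive y b + t * Derive (qf th x y) b).
      { apply is_derive_unique. auto_derive. split. apply Cinf_ex; auto. split. apply Cinf_ex; auto. auto.
        change (fun x0 : R => y x0) with y. change (fun x0 : R => qf th x y x0) with (qf th x y). ring. }
      rewrite E1, E2. unfold PF, P1. ring.
    + apply Cinf_ex. cinf.
    + apply Cinf_ex. cinf.
Qed.

Lemma DF_ident : forall x y th : R -> R, Cinf x -> Cinf y -> Cinf th ->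
  (forall b, 0 < r2 x y b) -> (forall b, 0 < s2 x y b) ->
  (forall b, Derive th b = Wf x y b / r2 x y b) -> forall b,
  DF x (pf th x y) y (qf th x y) (Derive x) (Derive (pf th x y)) (Derive y) (Derive (qf th x y)) 0 b
  = -2 * Gf x y b + Derive (uf x y) b.
Proof.
  intros x y th Hx Hy Ht Hr Hs Hth b.
  assert (Cphi : Cinf (fun b => Derive th b / (Derive x b ^ 2 + Derive y b ^ 2))).
  { cinf. intro z; apply Rgt_not_eq, Hs. }
  assert (Ep : Derive (pf th x y) b = Derive (fun b => Derive th b / (Derive x b ^ 2 + Derive y b ^ 2)) b * Derive y b
     + (Derive th b / (Derive x b ^ 2 + Derive y b ^ 2)) * Derive (Derive y) b).
  { unfold pf. apply (Derive_mult (fun b => Derive th b / (Derive x b ^ 2 + Derive y b ^ 2)) (Derive y) b). apply Cinf_ex; auto. apply Cinf_ex; cinf. }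
  assert (Eq : Derive (qf th x y) b = Derive (fun b => Derive th b / (Derive x b ^ 2 + Derive y b ^ 2)) b * Derive x b
     + (Derive th b / (Derive x b ^ 2 + Derive y b ^ 2)) * Derive (Derive x) b).
  { unfold qf. apply (Derive_mult (fun b => Derive th b / (Derive x b ^ 2 + Derive y b ^ 2)) (Derive x) b). apply Cinf_ex; auto. apply Cinf_ex; cinf. }
  assert (HR := Hr b). assert (HS := Hs b). unfold r2, s2 in HR, HS.
  assert (HP : 0 < (x b ^ 2 + y b ^ 2) * (Derive x b ^ 2 + Derive y b ^ 2)) by (apply Rmult_lt_0_compat; auto).
  assert (HQ : 0 < sqrt ((x b ^ 2 + y b ^ 2) * (Derive x b ^ 2 + Derive y b ^ 2))) by (apply sqrt_lt_R0; auto).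
  assert (HQQ : sqrt ((x b ^ 2 + y b ^ 2) * (Derive x b ^ 2 + Derive y b ^ 2)) * sqrt ((x b ^ 2 + y b ^ 2) * (Derive x b ^ 2 + Derive y b ^ 2)) = (x b ^ 2 + y b ^ 2) * (Derive x b ^ 2 + Derive y b ^ 2)) by (apply sqrt_sqrt; lra).
  assert (Eu : Derive (uf x y) b =
    (Derive x b ^ 2 + Derive y b ^ 2 + x b * Derive (Derive x) b + y b * Derive (Derive y) b)
      / sqrt ((x b ^ 2 + y b ^ 2) * (Derive x b ^ 2 + Derive y b ^ 2))
    - (x b * Derive x b + y b * Derive y b) *
      (2 * (x b * Derive x b + y b * Derive y b) * (Derive x b ^ 2 + Derive y b ^ 2)
       + (x b ^ 2 + y b ^ 2) * (2 * (Derive x b * Derive (Derive x) b + Derive y b * Derive (Derive y) b)))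
      / (2 * (sqrt ((x b ^ 2 + y b ^ 2) * (Derive x b ^ 2 + Derive y b ^ 2)) * sqrt ((x b ^ 2 + y b ^ 2) * (Derive x b ^ 2 + Derive y b ^ 2)))
         * sqrt ((x b ^ 2 + y b ^ 2) * (Derive x b ^ 2 + Derive y b ^ 2)))).
  { apply is_derive_unique. unfold uf, Vf, r2, s2. auto_derive.
    - repeat split; try (apply Cinf_ex; cinf); auto.
      match goal with |- sqrt ?A <> 0 => replace A with ((x b ^ 2 + y b ^ 2) * (Derive x b ^ 2 + Derive y b ^ 2)) by ring end; lra.
    - change (fun x0 : R => x x0) with x. change (fun x0 : R => y x0) with y.
      change (fun x0 : R => Derive x x0) with (Derive x). change (fun x0 : R => Derive y x0) with (Derive y).
      match goal with |- context [sqrt ((x b * (x b * 1) + ?B) * ?C)] =>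
        replace ((x b * (x b * 1) + B) * C) with ((x b ^ 2 + y b ^ 2) * (Derive x b ^ 2 + Derive y b ^ 2)) by ring end.
      field. lra. }
  rewrite HQQ in Eu.
  rewrite Eu. unfold DF, PF, P1, dP1, Gf. rewrite Ep, Eq. unfold pf, qf. rewrite Hth.
  unfold Wf, r2, s2.
  match goal with |- context [sqrt (((x b - 0 * ?A) * ?B + ?C) * ?D)] =>
    replace (((x b - 0 * A) * B + C) * D) with ((x b ^ 2 + y b ^ 2) * (Derive x b ^ 2 + Derive y b ^ 2)) by ring end.
  field. lra.
Qed.

Lemma first_var : forall x y th : R -> R, Cinf x -> Cinf y -> Cinf th ->
  (forall b, 0 < r2 x y b) -> (forall b, 0 < s2 x y b) ->
  (forall b, Derive th b = Wf x y b / r2 x y b) ->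
  (forall b, x (b + 2 * PI) = x b) -> (forall b, y (b + 2 * PI) = y b) ->
  is_derive (fun t => area (ham_var (twisted x y) (fun _ b => th b) t)) 0
    (2 * PI * (-2 * RInt (Gf x y) 0 (2 * PI))).
Proof.
  intros x y th Hx Hy Ht Hr Hs Hth Hpx Hpy.
  assert (Cp : Cinf (pf th x y)). { unfold pf. cinf. intro b; apply Rgt_not_eq, Hs. }
  assert (Cq : Cinf (qf th x y)). { unfold qf. cinf. intro b; apply Rgt_not_eq, Hs. }
  assert (HQ : forall b, 0 < r2 x y b * s2 x y b) by (intro; apply Rmult_lt_0_compat; auto).
  assert (CG : Cinf (Gf x y)).
  { unfold Gf. apply Cinf_div. intro b. apply Rgt_not_eq, Rmult_lt_0_compat. auto. apply sqrt_lt_R0; auto.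
    unfold Wf; cinf. apply Cinf_mult. unfold r2; cinf. apply Cinf_sqrt. auto. unfold r2, s2; cinf. }
  assert (CU : Cinf (uf x y)).
  { unfold uf. apply Cinf_div. intro b. apply Rgt_not_eq, sqrt_lt_R0; auto.
    unfold Vf; cinf. apply Cinf_sqrt. auto. unfold r2, s2; cinf. }
  apply is_derive_ext with (fun t => 2 * PI * RInt (fun b => sqrt (PF x (pf th x y) y (qf th x y)
     (Derive x) (Derive (pf th x y)) (Derive y) (Derive (qf th x y)) t b)) 0 (2 * PI)).
  { intro t. symmetry. apply area_eq; auto. }
  replace (-2 * RInt (Gf x y) 0 (2 * PI)) with
    (RInt (fun b => DF x (pf th x y) y (qf th x y) (Derive x) (Derive (pf th x y)) (Derive y) (Derive (qf th x y)) 0 b) 0 (2 * PI)).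
  - apply is_derive_scal. apply param_deriv; intro b; try (apply cont_pt_of, Cinf_cont; cinf).
    unfold PF, P1. specialize (HQ b). unfold r2, s2 in HQ.
    replace (((x b - 0 * pf th x y b) * (x b - 0 * pf th x y b) +
      (y b + 0 * qf th x y b) * (y b + 0 * qf th x y b)) *
     ((Derive x b - 0 * Derive (pf th x y) b) * (Derive x b - 0 * Derive (pf th x y) b) +
      (Derive y b + 0 * Derive (qf th x y) b) * (Derive y b + 0 * Derive (qf th x y) b)))
     with ((x b ^ 2 + y b ^ 2) * (Derive x b ^ 2 + Derive y b ^ 2)) by ring. auto.
  - rewrite (RInt_ext _ (fun b => -2 * Gf x y b + Derive (uf x y) b)).
    2:{ intros b _. apply DF_ident; auto. }
    assert (ExG : ex_RInt (Gf x y) 0 (2 * PI)).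
    { apply (ex_RInt_continuous (V := R_CompleteNormedModule)). intros; apply Cinf_cont; auto. }
    assert (ExU : ex_RInt (Derive (uf x y)) 0 (2 * PI)).
    { apply (ex_RInt_continuous (V := R_CompleteNormedModule)). intros; apply Cinf_cont, Cinf_Derive; auto. }
    assert (E1 : RInt (fun b => -2 * Gf x y b + Derive (uf x y) b) 0 (2 * PI) =
       RInt (fun b => -2 * Gf x y b) 0 (2 * PI) + RInt (Derive (uf x y)) 0 (2 * PI)).
    { apply (RInt_plus (V := R_CompleteNormedModule) (fun b => -2 * Gf x y b)); auto.
      apply (ex_RInt_scal (V := R_CompleteNormedModule) (Gf x y) 0 (2 * PI) (-2)); auto. }
    assert (E2 : RInt (fun b => -2 * Gf x y b) 0 (2 * PI) = -2 * RInt (Gf x y) 0 (2 * PI)).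
    { apply (RInt_scal (V := R_CompleteNormedModule) (Gf x y) 0 (2 * PI) (-2)); auto. }
    assert (E3 : RInt (Derive (uf x y)) 0 (2 * PI) = 0).
    { rewrite RInt_Derive.
      - replace (2 * PI) with (0 + 2 * PI) by ring. unfold uf, Vf, r2, s2.
        rewrite Hpx, Hpy. rewrite !Derive_per by (first [assumption | apply Cinf_ex; assumption]). apply Rminus_eq_0.
      - intros; apply Cinf_ex; auto.
      - intros; apply Cinf_cont, Cinf_Derive; auto. }
    rewrite E1, E2, E3. apply Rplus_0_r.
Qed.

Lemma sumsq_pos : forall a b, a <> 0 \/ b <> 0 -> 0 < a ^ 2 + b ^ 2.
Proof.
  intros a b [H|H].
  - pose proof (Rsqr_pos_lt a H). pose proof (Rle_0_sqr b). unfold Rsqr in *. lra.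
  - pose proof (Rsqr_pos_lt b H). pose proof (Rle_0_sqr a). unfold Rsqr in *. lra.
Qed.

Theorem mainTheorem2 (gx gy : R -> R) :
  smooth_closed_curve gx gy ->
  in_open_half_plane gx gy ->
  ~ ham_stationary (twisted gx gy).
Proof.
  intros [Hnx [Hny [Hper [Hreg _]]]] [c [d [Hcd Hhp]]] Hst.
  assert (Cx : Cinf gx) by (apply Cinf_of_exn; auto).
  assert (Cy : Cinf gy) by (apply Cinf_of_exn; auto).
  assert (Hr : forall b, 0 < r2 gx gy b).
  { intro b. unfold r2. apply sumsq_pos. specialize (Hhp b).
    destruct (Req_dec (gx b) 0) as [E1|E1]; auto.
    destruct (Req_dec (gy b) 0) as [E2|E2]; auto.
    rewrite E1, E2 in Hhp. lra. }
  assert (Hs : forall b, 0 < s2 gx gy b).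
  { intro b. unfold s2. apply sumsq_pos. auto. }
  assert (Hcd2 : 0 < c ^ 2 + d ^ 2) by (apply sumsq_pos; auto).
  set (th := fun b => atan ((c * gy b - d * gx b) / (c * gx b + d * gy b))).
  assert (Hth : forall b, Derive th b = Wf gx gy b / r2 gx gy b).
  { intro b. apply is_derive_unique. unfold th.
    specialize (Hhp b). specialize (Hr b). unfold r2 in Hr.
    auto_derive.
    - repeat split; try (apply Cinf_ex; auto); apply Rgt_not_eq; lra.
    - change (fun x : R => gx x) with gx. change (fun x : R => gy x) with gy.
      unfold Wf, r2. field. split; [apply Rgt_not_eq; lra|split; [apply Rgt_not_eq; lra|]].
      replace ((c * gx b + d * gy b) * (c * gx b + d * gy b) +
        (c * gy b + - (d * gx b)) * (c * gy b + - (d * gx b))) with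
        ((c ^ 2 + d ^ 2) * (gx b ^ 2 + gy b ^ 2)) by ring.
      apply Rgt_not_eq, Rmult_lt_0_compat; auto. }
  assert (Cth : Cinf th).
  { intro n. destruct n. exact I. split.
    - intro b. exists (Wf gx gy b / r2 gx gy b). rewrite <- Hth. apply Derive_correct.
      unfold th. auto_derive. specialize (Hhp b). specialize (Hr b). unfold r2 in Hr.
      repeat split; try (apply Cinf_ex; auto); apply Rgt_not_eq; try lra.
    - apply Ck_ext with (fun b => Wf gx gy b / r2 gx gy b). intro; symmetry; auto.
      assert (Cinf (fun b => Wf gx gy b / r2 gx gy b)).
      { apply Cinf_div. intro z; apply Rgt_not_eq, Hr. unfold Wf; cinf. unfold r2; cinf. }
      apply H. }
  assert (Pth : forall b, th (b + 2 * PI) = th b).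
  { intro b. unfold th. destruct (Hper b) as [-> ->]. auto. }
  assert (HD := Hst (fun _ b => th b) (torus_b th Cth Pth)).
  assert (FV := first_var gx gy th Cx Cy Cth Hr Hs Hth (fun b => proj1 (Hper b)) (fun b => proj2 (Hper b))).
  pose proof (is_derive_unique _ _ _ FV) as HU. assert (HV : 2 * PI * (-2 * RInt (Gf gx gy) 0 (2 * PI)) = 0) by (rewrite <- HU; exact HD).
  assert (Gpos : 0 < RInt (Gf gx gy) 0 (2 * PI)).
  { pose proof PI_RGT_0 as HPI.
    assert (HQ : forall b, 0 < sqrt (r2 gx gy b * s2 gx gy b)).
    { intro b. apply sqrt_lt_R0, Rmult_lt_0_compat; auto. }
    assert (CG : Cinf (Gf gx gy)).
    { unfold Gf. apply Cinf_div. intro b. apply Rgt_not_eq, Rmult_lt_0_compat; auto.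
      unfold Wf; cinf. apply Cinf_mult. unfold r2; cinf. apply Cinf_sqrt.
      intro; apply Rmult_lt_0_compat; auto. unfold r2, s2; cinf. }
    destruct (MVT_gen (r2 gx gy) 0 (2 * PI) (fun b => 2 * Vf gx gy b)) as [c0 [Hc0 Hm]].
    - intros z _. unfold r2, Vf. auto_derive. repeat split; try (apply Cinf_ex; auto).
      change (fun x : R => gx x) with gx. change (fun x : R => gy x) with gy. ring.
    - intros z _. apply cont_pt_of, Cinf_cont. unfold r2; cinf.
    - rewrite Rmin_left, Rmax_right in Hc0 by lra.
      assert (E : r2 gx gy (2 * PI) = r2 gx gy 0).
      { unfold r2. rewrite <- (Rplus_0_l (2 * PI)). destruct (Hper 0) as [-> ->]. reflexivity. }
      rewrite E in Hm.
      assert (V0 : Vf gx gy c0 = 0) by nra.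
      apply RInt_pos_pt with c0; auto. lra.
      + intros; apply Cinf_cont; auto.
      + intros z _. unfold Gf. apply Rmult_le_pos. apply pow2_ge_0.
        apply Rlt_le, Rinv_0_lt_compat, Rmult_lt_0_compat; auto.
      + unfold Gf. apply Rmult_lt_0_compat.
        * assert (Id : Wf gx gy c0 ^ 2 + Vf gx gy c0 ^ 2 = r2 gx gy c0 * s2 gx gy c0)
            by (unfold Wf, Vf, r2, s2; ring).
          rewrite V0 in Id. pose proof (Hr c0). pose proof (Hs c0).
          assert (0 < r2 gx gy c0 * s2 gx gy c0) by (apply Rmult_lt_0_compat; auto). nra.
        * apply Rinv_0_lt_compat, Rmult_lt_0_compat; auto. }
  pose proof PI_RGT_0. nra.
Qed.
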